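(* Let $f\in C^2(\mathbb{R}^d)$, $\gamma:\mathbb{R}_+\to\mathbb{R}_+$ continuous with $c\le\gamma(t)\le C$ ($0<c\le C$), $0<\beta<\frac{2c}{C^2}$, and let $x\in C^2([0,T[;\mathbb{R}^d)$ solve $\ddot x+\gamma(t)\dot x+\nabla f(x+\beta\dot x)=0$ on $[0,T[$. Define $V(t)=f(x(t)+\beta\dot x(t))+\frac12\|\dot x(t)\|^2$. Then for all $t\in[0,T[$, $$V'(t)\le-\delta_1\big(\|\dot x(t)\|^2+\|\nabla f(x(t)+\beta\dot x(t))\|^2\big),\qquad \delta_1=\min\Big(\frac c2,\ \beta\Big(1-\frac{\beta C^2}{2c}\Big)\Big)>0.$$ *)

(* Defs.v *)
From HB Require Import structures.
From mathcomp Require Import all_boot all_order all_algebra.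
From mathcomp Require Import all_classical all_reals all_analysis.
Set Implicit Arguments. Unset Strict Implicit. Unset Printing Implicit Defensive.
Import Order.TTheory GRing.Theory Num.Theory.
Import numFieldNormedType.Exports.
Local Open Scope classical_set_scope.
Local Open Scope ring_scope.

Definition evec (R : realType) (d : nat) (i : 'I_d) : 'rV[R]_d := delta_mx 0 i.

(* squared Euclidean norm (the library's norm on 'rV is the sup norm) *)
Definition sqnorm (R : realType) (d : nat) (v : 'rV[R]_d) : R :=
  \sum_(i < d) (v 0 i) ^+ 2.

Definition partial (R : realType) (d : nat) (i : 'I_d) (f : 'rV[R]_d -> R)
  (y : 'rV[R]_d) : R := 'D_(evec R i) f y.

Definition grad (R : realType) (d : nat) (f : 'rV[R]_d -> R) (y : 'rV[R]_d)
  : 'rV[R]_d := \row_(i < d) partial i f y.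

Definition C2 (R : realType) (d : nat) (f : 'rV[R]_d -> R) : Prop :=
  [/\ continuous f,
      (forall i y, derivable f y (evec R i)),
      (forall i, continuous (partial i f)),
      (forall i j y, derivable (partial i f) y (evec R j)) &
      (forall i j, continuous (partial j (partial i f)))].

(* g' is the derivative of g on the set A (one-sided at boundary points of
   A, i.e. the difference quotient is taken with s in A, s <> t). *)
Definition has_deriv_on (R : realType) (V : normedModType R) (A : set R)
  (g g' : R -> V) : Prop :=
  forall t, A t ->
    (fun s => (s - t)^-1 *: (g s - g t)) @ within A t^' --> g' t.

Definition Ico0 (R : realType) (T : \bar R) : set R :=
  [set t | 0 <= t /\ (t%:E < T)%E].

(* Main.v *)
Require Import Defs.
From HB Require Import structures.
From mathcomp Require Import all_boot all_order all_algebra.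
From mathcomp Require Import all_classical all_reals all_analysis.
From mathcomp Require Import ring lra.
Import Order.TTheory GRing.Theory Num.Theory.
Import numFieldNormedType.Exports.
Local Open Scope classical_set_scope.
Local Open Scope ring_scope.
Set Implicit Arguments. Unset Strict Implicit.
Lemma coord_le (R : realType) d (v : 'rV[R]_d) i : `|v 0 i| <= `|v|.
Proof.
have -> : `|v| = mx_norm v by []; rewrite mx_normrE; apply/bigmax_geP; right => /=.
by exists (0, i).
Qed.

Lemma dir_deriv (R : realType) d (g : 'rV[R]_d -> R) (q e : 'rV[R]_d) u :
  derivable g (q + u *: e) e ->
  is_derive u 1 (fun w : R => g (q + w *: e)) ('D_e g (q + u *: e)).
Proof.
move=> dg.
have E : (fun h : R => h^-1 *: ((fun w : R => g (q + w *: e)) (h *: 1 + u) - g (q + u *: e)))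
   = (fun h => h^-1 *: (g (h *: e + (q + u *: e)) - g (q + u *: e))).
  apply/funext => h /=; congr (_ *: (g _ - _)).
  rewrite (_ : h *: (1:R) = h); last exact: mulr1.
  by rewrite scalerDl addrCA addrA.
apply: DeriveDef.
  by rewrite /derivable E.
by rewrite /derive E.
Qed.

Lemma mvt_dir (R : realType) d (g : 'rV[R]_d -> R) (q e : 'rV[R]_d) (h : R) :
  (forall u : R, derivable g (q + u *: e) e) ->
  exists th : R, `|th| <= `|h| /\ g (q + h *: e) - g q = h * 'D_e g (q + th *: e).
Proof.
move=> dg.
pose G := fun w : R => g (q + w *: e).
have GD (w : R) : is_derive w (1:R) G ('D_e g (q + w *: e)) by exact: dir_deriv.
have Gc : continuous G.
  move=> w; have dG := @ex_derive _ _ _ _ _ _ _ (GD w).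
  exact/differentiable_continuous/derivable1_diffP.
have [hpos|hneg] := leP 0 h.
- have [c cI E] := MVT_segment hpos (fun w _ => GD w) (continuous_subspaceT Gc).
  exists c; move: cI; rewrite in_itv /= => /andP[c0 ch].
  split; first by rewrite !ger0_norm // (le_trans c0 ch).
  by rewrite /G scale0r addr0 in E; rewrite E subr0 mulrC.
- have [c cI E] := MVT_segment (ltW hneg) (fun w _ => GD w) (continuous_subspaceT Gc).
  exists c; move: cI; rewrite in_itv /= => /andP[hc c0].
  split; first by rewrite !ler0_norm // ?lerN2 // (ltW hneg).
  move: E; rewrite /G scale0r addr0 sub0r => E.
  by rewrite -opprB E mulrN opprK mulrC.
Qed.

Lemma rV_norm_le (R : realType) d (v : 'rV[R]_d) r :
  0 <= r -> (forall j, `|v 0 j| <= r) -> `|v| <= r.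
Proof.
move=> r0 H; have -> : `|v| = mx_norm v by [].
rewrite mx_normrE; apply/bigmax_leP; split => // -[i j] _ /=.
by rewrite ord1; exact: H.
Qed.

Definition Pk (R : realType) d (h : 'rV[R]_d) (k : nat) : 'rV[R]_d :=
  \row_(j < d) (if (j < k)%N then h 0 j else 0).

Lemma evecE (R : realType) d (k j : 'I_d) : evec R k 0 j = (j == k)%:R.
Proof. by rewrite /evec mxE eqxx. Qed.

Lemma Pk0 (R : realType) d (h : 'rV[R]_d) : Pk h 0 = 0.
Proof. by apply/rowP => j; rewrite !mxE. Qed.

Lemma Pkd (R : realType) d (h : 'rV[R]_d) : Pk h d = h.
Proof. by apply/rowP => j; rewrite !mxE ltn_ord. Qed.

Lemma PkS (R : realType) d (h : 'rV[R]_d) (k : 'I_d) :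
  Pk h k.+1 = Pk h k + h 0 k *: evec R k.
Proof.
apply/rowP => j; rewrite !mxE eqxx /=.
case: (eqVneq j k) => [->|njk].
  by rewrite ltnS leqnn ltnn add0r mulr1.
by rewrite ltnS leq_eqVlt val_eqE (negbTE njk) mulr0 addr0.
Qed.

Lemma Pk_norm (R : realType) d (h : 'rV[R]_d) (k : 'I_d) th :
  `|th| <= `|h| -> `|Pk h k + th *: evec R k| <= `|h|.
Proof.
move=> thh; apply: rV_norm_le => // j; rewrite !mxE eqxx /=.
case: (eqVneq j k) => [->|njk].
  by rewrite ltnn add0r mulr1.
rewrite mulr0 addr0; case: ifP => _; [exact: coord_le| by rewrite normr0].
Qed.

Lemma frechet (R : realType) d (g : 'rV[R]_d -> R) (p : 'rV[R]_d) :
  (forall i y, derivable g y (evec R i)) -> (forall i, continuous (partial i g)) ->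
  forall eps, 0 < eps -> exists2 del, 0 < del &
   forall h, `|h| < del ->
     `|g (p + h) - g p - \sum_(i < d) h 0 i * partial i g p| <= eps * (d%:R * `|h|).
Proof.
move=> dg cg eps e0.
have Hn : \forall q \near p, forall i : 'I_d, `|partial i g p - partial i g q| < eps.
  have H1 (i : 'I_d) : \forall q \near p, `|partial i g p - partial i g q| < eps.
    exact: (cvgr_dist_lt _ _ (cg i p) _ e0).
  exact: (@filter_forall _ 'I_d (fun i q => `|partial i g p - partial i g q| < eps) (nbhs p) _ H1).
have [del del0 Hd] := (nbhs_normP _ _).1 Hn.
exists del => // h hd.
have tel : g (p + h) - g p = \sum_(k < d) (g (p + Pk h k.+1) - g (p + Pk h k)).
  rewrite -(big_mkord xpredT (fun k => g (p + Pk h k.+1) - g (p + Pk h k))).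
  by rewrite telescope_sumr // Pkd Pk0 addr0.
rewrite tel -sumrB.
apply: le_trans (ler_norm_sum _ _ _) _.
have B (k : 'I_d) : `|g (p + Pk h k.+1) - g (p + Pk h k) - h 0 k * partial k g p|
    <= eps * `|h|.
  have [th [thle E]] := @mvt_dir _ _ g (p + Pk h k) (evec R k) (h 0 k) (fun u => dg k _).
  rewrite PkS addrA E -mulrBr normrM mulrC.
  apply: ler_pM => //; last exact: coord_le.
  have Hq : `|p - (p + Pk h k + th *: evec R k)| < del.
    rewrite -addrA opprD addrA subrr sub0r normrN.
    exact: le_lt_trans (@Pk_norm _ _ h k th (le_trans thle (coord_le _ _))) hd.
  by move: (Hd _ Hq) => /(_ k)/ltW; rewrite distrC.
apply: le_trans (ler_sum _ (fun k _ => B k)) _.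
rewrite -(big_mkord xpredT (fun _ => eps * `|h|)) sumr_const_nat subn0 le_eqVlt; apply/orP; left; apply/eqP.
rewrite -mulr_natr; ring.
Qed.

Lemma sum_cvg (R : realType) (T : Type) (F : set_system T) (FF : Filter F) n
  (f : 'I_n -> T -> R) (a : 'I_n -> R) :
  (forall i, f i s @[s --> F] --> a i) ->
  \sum_(i < n) f i s @[s --> F] --> \sum_(i < n) a i.
Proof.
move=> H.
apply: (cvg_big (op:=+%R) (x0:=0) (P:=xpredT)) => //.
exact: add_continuous.
Qed.

Lemma coord_cvg (R : realType) d (T : Type) (F : set_system T) (FF : Filter F)
  (Q : T -> 'rV[R]_d) (v : 'rV[R]_d) (i : 'I_d) :
  Q s @[s --> F] --> v -> Q s 0 i @[s --> F] --> v 0 i.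
Proof.
move=> HQ; exact: (continuous_cvg FF (@coord_continuous R 1 d 0 i v) HQ).
Qed.

Lemma chain_within (R : realType) d (g : 'rV[R]_d -> R) (A : set R)
  (y : R -> 'rV[R]_d) (t : R) (v : 'rV[R]_d) :
  (forall i z, derivable g z (evec R i)) -> (forall i, continuous (partial i g)) ->
  (fun s => (s - t)^-1 *: (y s - y t)) @ within A t^' --> v ->
  (fun s => (s - t)^-1 * (g (y s) - g (y t))) @ within A t^' -->
    \sum_(i < d) v 0 i * partial i g (y t).
Proof.
move=> dg cg HQ.
pose Q s := (s - t)^-1 *: (y s - y t).
pose L (u : 'rV[R]_d) := \sum_(i < d) u 0 i * partial i g (y t).
pose r s := g (y t + (y s - y t)) - g (y t) - L (y s - y t).
have E : (fun s => (s - t)^-1 * (g (y s) - g (y t))) =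
    (fun s => L (Q s)) + (fun s => (s - t)^-1 * r s).
  apply/funext => s /=.
  have LQ : L (Q s) = (s - t)^-1 * L (y s - y t).
    by rewrite /L big_distrr; apply: eq_bigr => i _; rewrite /Q !mxE /= mulrA.
  change ((s - t)^-1 * (g (y s) - g (y t)) = L (Q s) + (s - t)^-1 * r s).
  rewrite LQ /r (addrC (y t) (y s - y t)) subrK.
  by rewrite [in RHS]mulrBr [in RHS]addrC subrK.
rewrite E -[X in _ --> X]addr0; apply: cvgD.
  apply: sum_cvg => i; apply: cvgM; last exact: cvg_cst.
  exact: coord_cvg.
apply/cvgrPdist_le => eps e0.
pose K := d%:R * (`|v| + 1).
have K0 : 0 <= K by rewrite /K mulr_ge0 // addr_ge0.
pose e' := eps / (K + 1).
have e'0 : 0 < e' by rewrite /e' divr_gt0 // ltr_wpDl.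
have e'K : e' * K <= eps.
  rewrite /e' mulrAC ler_pdivrMr ?ltr_wpDl //.
  by rewrite ler_pM2l // lerDl.
have [del del0 Hf] := @frechet _ _ g (y t) dg cg e' e'0.
have v10 : 0 < `|v| + 1 by rewrite ltr_wpDl.
near=> s.
have sneq : s != t.
  near: s; apply: (cvg_within A); exact: (nbhs_dnbhs_neq t).
have Qb : `|Q s| <= `|v| + 1.
  have : `|v - Q s| < 1.
    by near: s; exact: (cvgr_dist_lt _ _ HQ _ ltr01).
  move=> /ltW H1; have := ler_normB v (v - Q s).
  rewrite opprB addrC subrK => H2; apply: le_trans H2 _.
  by rewrite lerD2l.
have st : `|s - t| < del / (`|v| + 1).
  near: s; apply: (cvg_within A); apply: nbhs_dnbhs.
  apply/nbhs_normP; exists (del / (`|v| + 1)); first by rewrite /= divr_gt0.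
  by move=> z /=; rewrite distrC.
have pos : 0 < `|s - t| by rewrite normr_gt0 subr_eq0.
have ys : y s - y t = (s - t) *: Q s.
  by rewrite /Q scalerA mulfV ?subr_eq0 // scale1r.
have ysn : `|y s - y t| = `|s - t| * `|Q s| by rewrite ys normrZ.
have ysd : `|y s - y t| < del.
  rewrite ysn; apply: le_lt_trans (_ : `|s - t| * (`|v| + 1) < del).
    by rewrite ler_wpM2l.
  by rewrite -ltr_pdivlMr.
have rs := Hf _ ysd.
rewrite sub0r normrN normrM normfV ler_pdivrMl //.
apply: le_trans rs _.
rewrite ysn.
apply: le_trans (_ : e' * (d%:R * (`|s - t| * (`|v| + 1))) <= _).
  apply: ler_wpM2l; first exact: ltW.
  apply: ler_wpM2l => //; apply: ler_wpM2l => //.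
have -> : e' * (d%:R * (`|s - t| * (`|v| + 1))) = `|s - t| * (e' * K) by rewrite /K; ring.
by apply: ler_wpM2l.
Unshelve. all: by end_near.
Qed.

Lemma sqnorm_deriv (R : realType) d (A : set R) (z : R -> 'rV[R]_d) (t : R)
  (w : 'rV[R]_d) :
  (fun s => (s - t)^-1 *: (z s - z t)) @ within A t^' --> w ->
  (fun s => (s - t)^-1 * (sqnorm (z s) - sqnorm (z t))) @ within A t^' -->
    \sum_(i < d) 2 * (z t 0 i * w 0 i).
Proof.
move=> HQ.
pose Q s := (s - t)^-1 *: (z s - z t).
have E : (fun s => (s - t)^-1 * (sqnorm (z s) - sqnorm (z t))) =
  (fun s => \sum_(i < d) Q s 0 i * (z t 0 i + z t 0 i + (s - t) * Q s 0 i)).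
  apply/funext => s; rewrite /sqnorm /Q /=.
  have [->|st] := eqVneq s t.
    rewrite !subrr invr0 mul0r; apply/esym/big1 => i _.
    by rewrite scale0r mxE mul0r.
  rewrite -sumrB big_distrr; apply: eq_bigr => i _ /=.
  rewrite !mxE /=; field.
  by rewrite subr_eq0.
have Hst : (fun s => s - t) @ within A t^' --> 0.
  rewrite -(subrr t); apply: cvgB; last exact: cvg_cst.
  move=> P Pt; apply: (cvg_within A); exact: (@nbhs_dnbhs _ t P Pt).
have -> : \sum_(i < d) 2 * (z t 0 i * w 0 i) =
    \sum_(i < d) w 0 i * (z t 0 i + z t 0 i + 0 * w 0 i).
  by apply: eq_bigr => i _; ring.
rewrite E; apply: sum_cvg => i.
apply: cvgM; first exact: coord_cvg.
apply: cvgD; first exact: cvg_cst.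
apply: cvgM; first exact: Hst.
exact: coord_cvg.
Qed.

Lemma term_ineq (R : realType) (a p g beta m q c : R) :
  0 < beta -> 0 < c -> c <= g -> m <= c / 2 -> g / 2 <= q -> m <= beta * (1 - beta * q) ->
  (a + beta * (- g * a - p)) * p + 2^-1 * (2 * (a * (- g * a - p)))
    <= - m * (a ^+ 2 + p ^+ 2).
Proof.
move=> b0 c0 cg mc gq mq.
have g0 : 0 <= g / 2 - m by lra.
have P0 : 0 <= beta ^+ 2 * (q - g / 2) by rewrite mulr_ge0 ?sqr_ge0 ?subr_ge0.
have P1 : 0 <= g * (a + beta * p) ^+ 2.
  by rewrite mulr_ge0 ?sqr_ge0 //; lra.
have P2 : 0 <= (g / 2 - m) * a ^+ 2 by rewrite mulr_ge0 ?sqr_ge0.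
have c3 : 0 <= beta - beta ^+ 2 * g / 2 - m by nra.
have P3 : 0 <= (beta - beta ^+ 2 * g / 2 - m) * p ^+ 2 by rewrite mulr_ge0 ?sqr_ge0.
nra.
Qed.

Theorem mainTheorem11 (R : realType) (d : nat) (f : 'rV[R]_d -> R)
  (gamma : R -> R) (c C beta : R) (T : \bar R) (x x1 x2 : R -> 'rV[R]_d) :
  C2 f ->
  {within `[0, +oo[, continuous gamma} ->
  0 < c -> c <= C ->
  (forall t, 0 <= t -> c <= gamma t <= C) ->
  0 < beta -> beta < 2 * c / C ^+ 2 ->
  has_deriv_on (Ico0 T) x x1 ->
  has_deriv_on (Ico0 T) x1 x2 ->
  {within Ico0 T, continuous x2} ->
  (forall t, Ico0 T t ->
     x2 t + gamma t *: x1 t + grad f (x t + beta *: x1 t) = 0) ->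
  let V := fun t => f (x t + beta *: x1 t) + 2^-1 * sqnorm (x1 t) in
  let delta1 := Num.min (c / 2) (beta * (1 - beta * C ^+ 2 / (2 * c))) in
  0 < delta1 /\
  exists V' : R -> R, has_deriv_on (Ico0 T) V V' /\
    forall t, Ico0 T t ->
      V' t <= - delta1 * (sqnorm (x1 t) + sqnorm (grad f (x t + beta *: x1 t))).
Proof.
move=> [fc fd pc _ _] gc c0 cC gb b0 bl dx dx1 cx2 eqx V delta1.
have C0 : 0 < C by apply: lt_le_trans cC.
pose q := C ^+ 2 / (2 * c).
have bq : beta * C ^+ 2 / (2 * c) = beta * q by rewrite /q mulrA.
have bq1 : beta * q < 1.
  rewrite -bq ltr_pdivrMr ?mulr_gt0 // mul1r.
  by move: bl; rewrite ltr_pdivlMr ?exprn_gt0.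
split.
  rewrite /delta1 lt_min; apply/andP; split; first by rewrite divr_gt0.
  by rewrite bq mulr_gt0 // subr_gt0.
pose y s := x s + beta *: x1 s.
pose V' t := \sum_(i < d) (x1 t + beta *: x2 t) 0 i * partial i f (y t) +
  2^-1 * \sum_(i < d) 2 * (x1 t 0 i * x2 t 0 i).
exists V'; split.
  move=> t At.
  have Hy : (fun s => (s - t)^-1 *: (y s - y t)) @ within (Ico0 T) t^' -->
      x1 t + beta *: x2 t.
    have -> : (fun s => (s - t)^-1 *: (y s - y t)) =
        (fun s => (s - t)^-1 *: (x s - x t)) +
        (fun s => beta *: ((s - t)^-1 *: (x1 s - x1 t))).
      apply/funext => s.
      change ((s - t)^-1 *: (y s - y t) =
        (s - t)^-1 *: (x s - x t) + beta *: ((s - t)^-1 *: (x1 s - x1 t))).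
      rewrite /y opprD addrACA -scalerBr scalerDr !scalerA mulrC.
      done.
    apply: cvgD; first exact: dx.
    by apply: cvgZ; [exact: cvg_cst | exact: dx1].
  have H1 := chain_within fd pc Hy.
  have H2 := sqnorm_deriv (dx1 t At).
  have -> : (fun s => (s - t)^-1 *: (V s - V t)) =
      (fun s => (s - t)^-1 * (f (y s) - f (y t))) +
      (fun s => 2^-1 * ((s - t)^-1 * (sqnorm (x1 s) - sqnorm (x1 t)))).
    apply/funext => s.
    change ((s - t)^-1 * (V s - V t) = (s - t)^-1 * (f (y s) - f (y t)) +
      2^-1 * ((s - t)^-1 * (sqnorm (x1 s) - sqnorm (x1 t)))).
    rewrite /V /y; ring.
  apply: cvgD; first exact: H1.
  by apply: cvgM; [exact: cvg_cst | exact: H2].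
move=> t At.
have t0 : 0 <= t by case: At.
have /andP[gc1 gC] := gb t t0.
have x2i (i : 'I_d) : x2 t 0 i = - gamma t * x1 t 0 i - partial i f (y t).
  have := congr1 (fun M : 'rV[R]_d => M 0 i) (eqx t At).
  rewrite !mxE /= => h.
  lra.
have m1 : delta1 <= c / 2 by rewrite /delta1 ge_min lexx.
have m2 : delta1 <= beta * (1 - beta * q) by rewrite /delta1 ge_min -bq lexx orbT.
have gq : gamma t / 2 <= q.
  rewrite /q ler_pdivlMr ?mulr_gt0 //.
  have -> : gamma t / 2 * (2 * c) = gamma t * c by field.
  by rewrite expr2; nra.
rewrite /V' /sqnorm -big_split /= !big_distrr /= -big_split /=.
apply: ler_sum => i _.
rewrite !mxE x2i.
exact: (@term_ineq R _ _ (gamma t) beta delta1 q c b0 c0 gc1 m1 gq m2).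
Qed.
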